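(* Let $k\ge 1$ be an integer and let $F(z,u)=\sum_{P} z^{\mathrm{up}(P)}u^{\mathrm{end}(P)}$, where the sum runs over all nonempty $k$-Dyck prefixes $P$ whose last step is an up-step, $\mathrm{up}(P)$ is the number of up-steps of $P$ and $\mathrm{end}(P)$ is the height at which $P$ ends. Then, as formal power series in $z$ (with coefficients polynomials in $u$), $$F(z,u)=zu^k\,\frac{\overline{u}-u}{1-u+zu^{k+1}},$$ where $$\overline{u}=\sum_{\ell\ge0}\frac1{1+\ell(k+1)}\binom{1+\ell(k+1)}{\ell}z^\ell$$ is the power series solution of $1-\overline{u}+z\overline{u}^{k+1}=0$.
   Context: Fix an integer $k\ge1$. A $k$-Dyck prefix is a lattice path starting at $(0,0)$ using up-steps $(1,k)$ and down-steps $(1,-1)$ that never goes below the $x$-axis. The height (level) of a point is its $y$-coordinate. *)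

(* Defs.v *)
From mathcomp Require Import all_boot all_order all_algebra.
Set Implicit Arguments. Unset Strict Implicit. Unset Printing Implicit Defensive.
Import Order.TTheory GRing.Theory Num.Theory.
Local Open Scope ring_scope.

(* ---- k-Dyck prefixes: a path is a seq bool, true = up-step (1,k), false = down-step (1,-1) *)
Definition ht (k : nat) (s : seq bool) : int :=
  \sum_(b <- s) (if b then (k%:Z) else (-1)).

Definition kDyck (k : nat) (s : seq bool) : bool :=
  all (fun i => 0 <= ht k (take i s)) (iota 0 (size s).+1).

(* nonempty and last step is an up-step *)
Definition endsUp (s : seq bool) : bool := last false s.

(* Such a P has m <= k*n down-steps, hence
   length < (k+1)*n + 1, so all of them are enumerated below. *)
Definition Fcoef (k n : nat) : {poly rat} :=
  \sum_(L < ((k.+1) * n).+1)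
    \sum_(t : L.-tuple bool | [&& kDyck k t, count id t == n & endsUp t])
      'X^(absz (ht k t)).

Definition fps (R : nzRingType) := nat -> R.
Definition fconst (R : nzRingType) (c : R) : fps R := fun n => if n == 0%N then c else 0.
Definition fadd (R : nzRingType) (f g : fps R) : fps R := fun n => f n + g n.
Definition fneg (R : nzRingType) (f : fps R) : fps R := fun n => - f n.
Definition fmul (R : nzRingType) (f g : fps R) : fps R :=
  fun n => \sum_(i < n.+1) f i * g (n - i)%N.
Definition fz (R : nzRingType) (f : fps R) : fps R :=
  fun n => if n is n'.+1 then f n' else 0.
Definition fpow (R : nzRingType) (f : fps R) (e : nat) : fps R :=
  iter e (fmul f) (fconst 1).

(* F(z,u) in Q[u][[z]] *)
Definition Fser (k : nat) : fps {poly rat} := fun n => Fcoef k n.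

Definition ubar (k : nat) : fps rat :=
  fun l => ('C(1 + l * k.+1, l))%:R / (1 + l * k.+1)%:R.

(* Main.v *)
Require Import Defs.
From mathcomp Require Import all_boot all_order all_algebra.
From mathcomp Require Import ring lra zify.
Import Order.TTheory GRing.Theory Num.Theory.
Local Open Scope ring_scope.

Definition fc (k m n : nat) : rat :=
  if (m + n == 0)%N then 1
  else m%:R / (m + k.+1 * n)%:R * ('C(m + k.+1 * n, n))%:R.

Lemma fc_m0 k m : fc k m 0 = 1.
Proof.
rewrite /fc muln0 addn0 bin0; case: m => [|m] //=.
by rewrite mulr1 divff // pnatr_eq0.
Qed.

Lemma fc_0S k n : fc k 0 n.+1 = 0.
Proof. by rewrite /fc /= mul0r mul0r. Qed.

Lemma fc_rec k m n : fc k m.+1 n.+1 = fc k m n.+1 + fc k (m.+1 + k) n.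
Proof.
set N := (m + k.+1 * n.+1)%N.
have HN : (m.+1 + k.+1 * n.+1 = N.+1)%N by rewrite /N addSn.
have HN2 : (m.+1 + k + k.+1 * n = N)%N by rewrite /N mulnS; lia.
have Z1 : (m.+1 + n.+1 == 0)%N = false by [].
have Z2 : (m + n.+1 == 0)%N = false by rewrite addnS.
have Z3 : (m.+1 + k + n == 0)%N = false by rewrite addSn.
rewrite /fc Z1 Z2 Z3 HN HN2.
have B1 : ('C(N.+1, n.+1))%:R = (N.+1)%:R * ('C(N, n))%:R / (n.+1)%:R :> rat.
  have := mul_bin_diag N.+1 n => /= /(congr1 (fun x => x%:R : rat)).
  rewrite !natrM => ->. by rewrite mulrC mulKf // pnatr_eq0.
have B2 : ('C(N, n.+1))%:R = (N%:R - n%:R) * ('C(N, n))%:R / (n.+1)%:R :> rat.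
  have := mul_bin_left N n => /(congr1 (fun x => x%:R : rat)).
  rewrite !natrM natrB; last by rewrite /N mulSn; lia.
  move=> <-. by rewrite mulrC mulKf // pnatr_eq0.
rewrite B1 B2.
have HNr : (N%:R : rat) = m%:R + (k%:R + 1) * (n%:R + 1) by rewrite /N natrD natrM -!natr1.
have N0 : (N%:R : rat) != 0 by rewrite pnatr_eq0 /N mulSn; lia.
have N1 : (N.+1%:R : rat) != 0 by rewrite pnatr_eq0.
have n1 : (n.+1%:R : rat) != 0 by rewrite pnatr_eq0.
set c := ('C(N, n))%:R : rat.
rewrite (natrD _ m.+1 k) -[N.+1%:R]natr1 -[n.+1%:R]natr1 -[m.+1%:R]natr1 HNr.
rewrite -[N.+1%:R]natr1 HNr in N1. rewrite HNr in N0.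
rewrite -[n.+1%:R]natr1 in n1.
field. by rewrite N0 N1 n1.
Qed.

Lemma bump0 i : bump 0 i = i.+1. Proof. by []. Qed.

Lemma fc_conv k n : forall a b,
  \sum_(i < n.+1) fc k a i * fc k b (n - i)%N = fc k (a + b) n.
Proof.
elim: n => [|n IHn] a b.
  by rewrite big_ord1 !fc_m0 mulr1.
elim: a => [|a IHa].
  rewrite big_ord_recl fc_m0 mul1r subn0 add0n big1 ?addr0 // => i _.
  by rewrite lift0 fc_0S mul0r.
rewrite big_ord_recl fc_m0 subn0.
under eq_bigr => i _ do rewrite lift0 fc_rec mulrDl.
rewrite big_split /= addrA mul1r.
have -> : fc k b n.+1 + \sum_(i < n.+1) fc k a i.+1 * fc k b (n.+1 - i.+1)%N
          = \sum_(i < n.+2) fc k a i * fc k b (n.+1 - i)%N.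
  by rewrite [RHS]big_ord_recl /= subn0 fc_m0 mul1r.
rewrite IHa.
under eq_bigr => i _ do rewrite subSS.
rewrite IHn (_ : (a.+1 + b = (a+b).+1)%N) // fc_rec; congr (_ + _); congr (fc k _ n); lia.
Qed.

Lemma ubar_fc k i : ubar k i = fc k 1 i.
Proof.
by rewrite /ubar /fc /= mulnC mul1r mulrC. Qed.

Lemma fpow_fc k e n : fpow (ubar k) e n = fc k e n.
Proof.
elim: e n => [|e IH] n.
  by rewrite /fpow /= /fconst; case: n => [|n]; rewrite ?fc_m0 ?fc_0S.
rewrite /fpow iterS -/(fpow (ubar k) e) /fmul.
have U := ubar_fc k.
under eq_bigr => i _ do rewrite U IH.
by rewrite fc_conv add1n.
Qed.

Lemma part1 k n : fadd (fadd (fconst 1) (fneg (ubar k))) (fz (fpow (ubar k) k.+1)) n = 0.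
Proof.
rewrite /fadd /fneg /fconst /fz.
have U := ubar_fc k n.
case: n U => [|n] U /=; first by rewrite addr0 U fc_m0 subrr.
have -> : fmul (ubar k) (fpow (ubar k) k) n = fpow (ubar k) k.+1 n by [].
by rewrite U fpow_fc fc_rec fc_0S !add0r add1n addNr.
Qed.

Section Tup.
Variable R : zmodType.

Lemma sum_tuple0 (G : seq bool -> R) : \sum_(t : 0.-tuple bool) G t = G [::].
Proof.
rewrite (eq_bigr (fun _ => G [::])); last by move=> t _; rewrite tuple0.
by rewrite big_const card_tuple /= addr0.
Qed.

Lemma sum_tuple_cons L (G : seq bool -> R) :
  \sum_(t : L.+1.-tuple bool) G t = \sum_(t : L.-tuple bool) (G (true :: t) + G (false :: t)).
Proof.
rewrite (reindex (fun p : bool * L.-tuple bool => [tuple of p.1 :: p.2])) /=.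
  rewrite -(pair_big xpredT xpredT (fun b (t : L.-tuple bool) => G (b :: t))) /=.
  by rewrite big_bool big_split.
exists (fun t => (thead t, [tuple of behead t])).
  by move=> [b t] _ /=; congr pair; apply/val_inj.
by move=> t _; apply/val_inj => /=; rewrite [in RHS](tuple_eta t).
Qed.

Lemma sum_tuple_rev L (G : seq bool -> R) :
  \sum_(t : L.-tuple bool) G t = \sum_(t : L.-tuple bool) G (rev t).
Proof.
rewrite (reindex (fun t : L.-tuple bool => [tuple of rev t])) //.
by exists (fun t : L.-tuple bool => [tuple of rev t]) => t _; apply/val_inj; rewrite /= revK.
Qed.

Lemma sum_tuple_rcons L (G : seq bool -> R) :
  \sum_(t : L.+1.-tuple bool) G t = \sum_(t : L.-tuple bool) (G (rcons t true) + G (rcons t false)).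
Proof.
rewrite sum_tuple_rev (sum_tuple_cons L (fun t => G (rev t))).
rewrite [RHS](sum_tuple_rev L (fun t => G (rcons t true) + G (rcons t false))).
by apply: eq_bigr => t _; rewrite !rev_cons.
Qed.
End Tup.

Definition okb (k s : nat) (t : seq bool) : bool :=
  all (fun i => 0 <= s%:Z + ht k (take i t)) (iota 0 (size t).+1).

Lemma ht_nil k : ht k [::] = 0.
Proof. by rewrite /ht big_nil. Qed.

Lemma ht_cons k b t : ht k (b :: t) = (if b then k%:Z else -1) + ht k t.
Proof. by rewrite /ht big_cons. Qed.

Lemma ht_rcons k t b : ht k (rcons t b) = ht k t + (if b then k%:Z else -1).
Proof. by rewrite /ht -cats1 big_cat big_seq1. Qed.

Lemma ht_count k t : ht k t = (k * count id t)%:Z - (size t - count id t)%:Z.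
Proof.
elim: t => [|b t IH]; first by rewrite ht_nil /= muln0 subrr.
rewrite ht_cons IH /=; case: b => /=.
  rewrite add1n subSS mulnS PoszD; ring.
rewrite add0n subSn ?count_size // -addn1 PoszD; ring.
Qed.

Lemma kDyck_okb k t : kDyck k t = okb k 0 t.
Proof. by apply: eq_all => i; rewrite add0r. Qed.

Lemma okb_ht k s t : okb k s t -> 0 <= s%:Z + ht k t.
Proof.
move=> H; have := allP H (size t); rewrite take_size mem_iota; apply.
by rewrite add0n ltnS leqnn.
Qed.

Lemma allcons (T : Type) (p : pred T) x s : all p (x :: s) = p x && all p s.
Proof. by []. Qed.

Lemma okb_cons k s b t :
  okb k s (b :: t) = if b then okb k (s + k) t else (0 < s)%N && okb k s.-1 t.
Proof.
rewrite /okb (_ : size (b :: t) = (size t).+1) //.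
rewrite (_ : iota 0 (size t).+2 = 0%N :: iota (1 + 0) (size t).+1) //.
rewrite iotaDl allcons all_map take0 ht_nil addr0 (_ : 0 <= s%:Z = true) // andTb.
have E : forall i, (preim (addn 1) (fun i => 0 <= s%:Z + ht k (take i (b :: t)))) i
   = (0 <= (s%:Z + (if b then k%:Z else -1)) + ht k (take i t)).
  by move=> i; rewrite /preim /= ht_cons addrA.
rewrite (eq_all E); case: b {E}.
  by apply: eq_all => i /=; rewrite PoszD.
case: s => [|s].
  rewrite add0r; apply/negbTE; apply/negP => /allP /(_ 0%N).
  by rewrite mem_iota take0 ht_nil addr0 => /(_ isT).
by rewrite ltn0Sn andTb; apply: eq_all => i /=; rewrite -addn1 PoszD addrK.
Qed.

Lemma kDyck_rcons k t b :
  kDyck k (rcons t b) = kDyck k t && (0 <= ht k (rcons t b)).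
Proof.
rewrite /kDyck size_rcons -addn1 iotaD all_cat add0n.
rewrite (_ : iota (size t).+1 1 = [:: (size t).+1]) // allcons andbT.
rewrite take_oversize ?size_rcons //; congr andb.
apply: eq_in_all => i; rewrite mem_iota add0n ltnS => Hi.
by rewrite -cats1 takel_cat.
Qed.

Definition Ws (k s L n : nat) : rat :=
  \sum_(t : L.-tuple bool)
     (if [&& okb k s t, count id t == n & s%:Z + ht k t == 0] then 1 else 0).

Lemma Ws_closed k L : forall s n,
  Ws k s L n = if (L == s + k.+1 * n)%N then fc k s.+1 n else 0.
Proof.
elim: L => [|L IH] s n.
  rewrite /Ws (@sum_tuple0 rat (fun t => if [&& okb k s t, count id t == n & s%:Z + ht k t == 0] then 1 else 0)).
  rewrite /okb /= ht_nil !addr0.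
  case: s => [|s]; case: n => [|n]; rewrite ?muln0 ?addn0 ?fc_m0 //.
rewrite /Ws (@sum_tuple_cons rat L (fun t => if [&& okb k s t, count id t == n & s%:Z + ht k t == 0] then 1 else 0)) big_split.
have E1 : forall n, \sum_(t : L.-tuple bool)
      (if [&& okb k s (true :: t), count id (true :: t) == n
            & s%:Z + ht k (true :: t) == 0] then 1 else 0 : rat)
     = if n is n'.+1 then Ws k (s + k) L n' else 0.
  move=> {IH} n; case: n => [|n].
    by rewrite big1 // => t _; rewrite /= andbF.
  apply: eq_bigr => t _; rewrite okb_cons /= eqSS ht_cons PoszD addrA.
  by [].
have E2 : forall s, \sum_(t : L.-tuple bool)
      (if [&& okb k s (false :: t), count id (false :: t) == n
            & s%:Z + ht k (false :: t) == 0] then 1 else 0 : rat)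
     = if s is s'.+1 then Ws k s' L n else 0.
  move=> {IH E1} s; case: s => [|s].
    by rewrite big1 // => t _; rewrite okb_cons.
  apply: eq_bigr => t _; rewrite okb_cons /= add0n.
  rewrite ht_cons addrA.
  by have -> : (s.+1)%:Z + -1 = s%:Z by rewrite -addn1 PoszD addrK.
rewrite E1 E2 /=; clear E1 E2; case: n => [|n]; case: s => [|s].
- by rewrite addr0 muln0.
- rewrite add0r IH muln0 !addn0 eqSS; case: (L == s); last by [].
  by rewrite !fc_m0.
- rewrite addr0 IH fc_rec fc_0S add0r add0n.
  rewrite (_ : (k + k.+1 * n = k.+1 * n.+1 - 1)%N); last by rewrite mulnS; lia.
  rewrite (_ : (L == k.+1 * n.+1 - 1)%N = (L.+1 == k.+1 * n.+1)%N) //.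
  by apply/eqP/eqP; rewrite mulnS; lia.
- rewrite !IH.
  have -> : (L == s.+1 + k + k.+1 * n)%N = (L.+1 == s.+1 + k.+1 * n.+1)%N.
    by apply/eqP/eqP; rewrite mulnS; lia.
  have -> : (L == s + k.+1 * n.+1)%N = (L.+1 == s.+1 + k.+1 * n.+1)%N.
    by apply/eqP/eqP; lia.
  case: eqP => _; last by rewrite addr0.
  by rewrite [RHS]fc_rec addrC.
Qed.

Definition Hs (k L n : nat) : {poly rat} :=
  \sum_(t : L.-tuple bool)
     (if kDyck k t && (count id t == n) then 'X^(absz (ht k t)) else 0).

Definition Hp k L n : {poly rat} := if n is m.+1 then Hs k L m else 0.

Lemma kDyck_ht k t : kDyck k t -> 0 <= ht k t.
Proof. by rewrite kDyck_okb => /okb_ht; rewrite add0r. Qed.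

Lemma X_Hs k L n :
  'X * Hs k L.+1 n = 'X^(k.+1) * Hp k L n + Hs k L n - (Ws k 0 L n)%:P.
Proof.
rewrite /Hs (@sum_tuple_rcons _ L (fun t => if kDyck k t && (count id t == n) then 'X^(absz (ht k t)) else 0)).
rewrite big_split mulrDr /= !mulr_sumr.
have E1 : forall t : L.-tuple bool,
   'X * (if kDyck k (rcons t true) && (count id (rcons t true) == n)
         then 'X^(absz (ht k (rcons t true))) else 0)
   = 'X^(k.+1) * (if kDyck k t && ((count id t).+1 == n) then 'X^(absz (ht k t)) else 0 : {poly rat}).
  move=> t; rewrite kDyck_rcons -cats1 count_cat /= addn1 cats1 ht_rcons.
  case: (boolP (kDyck k t)) => /= Hk; last by rewrite !mulr0.
  have H0 := @kDyck_ht k t Hk.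
  rewrite (_ : 0 <= ht k t + k%:Z) /=; last by apply: addr_ge0.
  case: eqP => _; last by rewrite !mulr0.
  have -> : absz (ht k t + k%:Z) = (absz (ht k t) + k)%N.
    by case: (ht k t) H0 => // m _; rewrite -PoszD absz_nat.
  by rewrite -exprS -exprD; congr (_ ^+ _); lia.
have E2 : forall t : L.-tuple bool,
   'X * (if kDyck k (rcons t false) && (count id (rcons t false) == n)
         then 'X^(absz (ht k (rcons t false))) else 0)
   = (if kDyck k t && (count id t == n) then 'X^(absz (ht k t)) else 0 : {poly rat})
     - (if [&& okb k 0 t, count id t == n & 0%:Z + ht k t == 0] then 1 else 0 : rat)%:P.
  move=> t; rewrite kDyck_rcons -cats1 count_cat /= addn0 cats1 ht_rcons -kDyck_okb add0r.
  case: (boolP (kDyck k t)) => /= Hk; last by rewrite mulr0 subrr.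
  have H0 := @kDyck_ht k t Hk.
  rewrite addn0; case: (count id t == n); rewrite /= ?andbT ?andbF; last by rewrite mulr0 polyC0 subr0.
  case: (ht k t) H0 => // -[|m] _.
    by rewrite /= mulr0 expr0 polyC1 subrr.
  rewrite (_ : 0 <= m.+1%:Z - 1); last by rewrite -addn1 PoszD addrK.
  rewrite (_ : m.+1%:Z - 1 = m%:Z); last by rewrite -addn1 PoszD addrK.
  by rewrite absz_nat -exprS polyC0 subr0.
rewrite (eq_bigr _ (fun t _ => E1 t)) (eq_bigr _ (fun t _ => E2 t)).
rewrite -mulr_sumr big_split /= sumrN /Ws rmorph_sum addrA; congr (_ * _ + _ - _).
rewrite /Hp; clear E1 E2; case: n => [|n].
  by rewrite big1 // => t _; rewrite andbF.
by apply: eq_bigr => t _; rewrite eqSS.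
Qed.

Lemma Hs_vanish k L n : (k.+1 * n < L)%N -> Hs k L n = 0.
Proof.
move=> HL; rewrite /Hs big1 // => t _.
case: (boolP (kDyck k t)) => //= Hk; case: eqP => //= Hc.
have := @kDyck_ht k t Hk; rewrite ht_count Hc size_tuple subr_ge0 lez_nat.
move=> H; exfalso; move: H HL; rewrite mulSn; lia.
Qed.

Lemma sum_widen (R : zmodType) (F : nat -> R) B N :
  (B <= N)%N -> (forall L, (B <= L)%N -> F L = 0) ->
  \sum_(L < N) F L = \sum_(L < B) F L.
Proof.
move=> HBN HF; elim: N HBN => [|N IH] HBN.
  by move: HBN; rewrite leqn0 => /eqP ->.
case: (ltngtP B N.+1) HBN => // [HB|->] _; last by [].
by rewrite big_ord_recr /= IH // HF // addr0.
Qed.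

Definition Pk k n : {poly rat} := \sum_(L < (k.+1 * n).+1) Hs k L n.

Lemma Pk_widen k n N : ((k.+1 * n).+1 <= N)%N -> \sum_(L < N) Hs k L n = Pk k n.
Proof.
move=> H; rewrite /Pk (@sum_widen _ (fun L => Hs k L n) _ _ H) // => L HL.
by apply: Hs_vanish.
Qed.

Lemma Hs0 k n : Hs k 0 n = if n == 0%N then 1 else 0.
Proof.
rewrite /Hs (@sum_tuple0 _ (fun t => if kDyck k t && (count id t == n) then 'X^(absz (ht k t)) else 0)).
rewrite /kDyck /= ht_nil /= eq_sym expr0.
by case: (n == 0%N).
Qed.

Lemma subKr' (R : zmodType) (a u : R) : u = a - (a - u).
Proof. by rewrite opprB addrC subrK. Qed.

Lemma keyP k n :
  (1 - 'X) * Pk k n + (if n is m.+1 then 'X^(k.+1) * Pk k m else 0)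
  = (ubar k n)%:P - (if n == 0%N then 'X else 0).
Proof.
set B := (k.+1 * n).+1.
have S : \sum_(L < B) 'X * Hs k L.+1 n
  = \sum_(L < B) ('X^(k.+1) * Hp k L n + Hs k L n - (Ws k 0 L n)%:P).
  by apply: eq_bigr => L _; apply: X_Hs.
rewrite -mulr_sumr big_split /= big_split /= sumrN -mulr_sumr -rmorph_sum in S.
have T1 : \sum_(L < B) Hs k L.+1 n = Pk k n - Hs k 0 n.
  rewrite [in RHS](_ : Pk k n = \sum_(L < B.+1) Hs k L n); last by rewrite Pk_widen.
  by rewrite [in RHS]big_ord_recl addrAC subrr add0r.
have T2 : \sum_(L < B) Hs k L n = Pk k n by [].
have T3 : \sum_(L < B) Hp k L n = if n is m.+1 then Pk k m else 0.
  rewrite /Hp; case: n {S T1 T2} @B => [|m] B; first by rewrite big1.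
  by apply: Pk_widen; rewrite /B ltnS leq_mul2l leqnSn orbT.
have T4 : \sum_(L < B) Ws k 0 L n = ubar k n.
  rewrite big_ord_recr /= big1 ?add0r.
    by rewrite Ws_closed add0n eqxx ubar_fc.
  move=> L _; rewrite Ws_closed add0n.
  by case: eqP => // HL; have := ltn_ord L; rewrite HL ltnn.
rewrite T1 T2 T3 T4 Hs0 in S.
have U : (ubar k n)%:P = 'X^(k.+1) * (if n is m.+1 then Pk k m else 0) + Pk k n
       - 'X * (Pk k n - (if n == 0%N then 1 else 0)).
  by rewrite S; apply: subKr'.
rewrite U; case: n {S T1 T2 T3 T4 U} @B => [|n] B /=; ring.
Qed.

Definition Es k L n : {poly rat} :=
  \sum_(t : L.-tuple bool)
     (if [&& kDyck k t, count id t == n & endsUp t] then 'X^(absz (ht k t)) else 0).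

Lemma Fcoef_Es k n : Fcoef k n = \sum_(L < (k.+1 * n).+1) Es k L n.
Proof. by apply: eq_bigr => L _; rewrite /Es big_mkcond. Qed.

Lemma Es0 k n : Es k 0 n = 0.
Proof.
by rewrite /Es (@sum_tuple0 _ (fun t => if [&& kDyck k t, count id t == n & endsUp t] then 'X^(absz (ht k t)) else 0)) /= !andbF.
Qed.

Lemma EsS k L n : Es k L.+1 n.+1 = 'X^k * Hs k L n.
Proof.
rewrite /Es (@sum_tuple_rcons _ L (fun t => if [&& kDyck k t, count id t == n.+1 & endsUp t] then 'X^(absz (ht k t)) else 0)).
rewrite /Hs mulr_sumr; apply: eq_bigr => t _.
rewrite /endsUp !last_rcons !andbF addr0 kDyck_rcons -cats1 count_cat /= addn1 eqSS cats1 ht_rcons.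
case: (boolP (kDyck k t)) => /= Hk; last by rewrite mulr0.
have H0 := @kDyck_ht k t Hk.
rewrite (_ : 0 <= ht k t + k%:Z) /=; last by apply: addr_ge0.
case: eqP => _; last by rewrite mulr0.
have -> : absz (ht k t + k%:Z) = (absz (ht k t) + k)%N.
  by case: (ht k t) H0 => // m _; rewrite -PoszD absz_nat.
by rewrite exprD mulrC.
Qed.

Lemma Fcoef0 k : Fcoef k 0 = 0.
Proof. by rewrite Fcoef_Es muln0 big_ord1 Es0. Qed.

Lemma FcoefS k n : Fcoef k n.+1 = 'X^k * Pk k n.
Proof.
rewrite Fcoef_Es big_ord_recl Es0 add0r.
rewrite (eq_bigr (fun L : 'I_(k.+1 * n.+1) => 'X^k * Hs k L n)); last first.
  by move=> L _; rewrite lift0 EsS.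
rewrite -mulr_sumr Pk_widen //.
by rewrite mulnS addSn ltnS leq_addl.
Qed.

Theorem mainTheorem1 (k : nat) (hk : (1 <= k)%N) :
  (forall n : nat,
     fadd (fadd (fconst 1) (fneg (ubar k))) (fz (fpow (ubar k) k.+1)) n = 0)
  /\
  (forall n : nat,
     fmul (Fser k)
          (fadd (fconst (1 - 'X)) (fz (fconst 'X^(k.+1)))) n
     = fz (fmul (fconst ('X^k : {poly rat}))
                (fadd (fun l => (ubar k l)%:P) (fneg (fconst 'X)))) n).
Proof.
split; first exact: part1.
case=> [|m].
  by rewrite /fmul big_ord1 /Fser Fcoef0 mul0r.
rewrite /fmul big_ord_recr big_ord_recr /= big1; last first.
  move=> i _; rewrite /fadd /fconst /fz.
  have -> : (m.+1 - i = (m - i).+1)%N by rewrite subSn // ltnW.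
  rewrite (_ : (m - i = (m - i.+1).+1)%N); last by rewrite subnSK.
  by rewrite /= addr0 mulr0.
rewrite big_ord_recl big1; last by move=> i _; rewrite /fconst /= mul0r.
rewrite /fconst /fadd /fneg /fz /= subnn subSnn /=.
rewrite !add0r !addr0 subn0 -keyP /Fser FcoefS.
case: m => [|m]; rewrite ?Fcoef0 ?FcoefS; ring.
Qed.
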